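(* Let $(b,c)$ be a connected graph over a countable set $X$ with Schrödinger operator $H=H_{b,c}$, and fix $x_0\in X$. Then $\mathcal{S}^+_1=\{f\in\mathcal{S}^+: f(x_0)=1\}$ is compact with respect to the product topology on $\mathbb{R}^X$.
   Context: A graph over $X$ is $(b,c)$ with $b:X\times X\to[0,\infty)$, $c:X\to\mathbb{R}$, $\sum_yb(x,y)<\infty$ for all $x$ ($b$ need not be symmetric); connected: any $x,z$ are joined by a finite sequence $y_1,\dots,y_n$ with $b(y_i,y_{i+1})>0$. $H_{b,c}f(x)=\sum_yb(x,y)(f(x)-f(y))+c(x)f(x)$ on $\mathrm{Dom}(H)=\{f:\sum_yb(x,y)|f(y)|<\infty\ \forall x\}$. $\mathcal{S}^+$ is the set of nonnegative, not identically zero $f\in\mathrm{Dom}(H)$ with $Hf\ge0$. *)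

(* Defs.v *)
From HB Require Import structures.
From mathcomp Require Import all_boot all_order all_algebra.
From mathcomp Require Import all_classical all_reals all_analysis.
From Stdlib Require Import Relations.
Set Implicit Arguments. Unset Strict Implicit. Unset Printing Implicit Defensive.
Import Order.TTheory GRing.Theory Num.Theory.
Import numFieldTopology.Exports numFieldNormedType.Exports.
Local Open Scope classical_set_scope.
Local Open Scope ring_scope.

Section Graphs.
Variables (R : realType) (X : countType).

Definition graph_connected (b : X -> X -> R) : Prop :=
  forall x z : X, clos_refl_trans X (fun u v => 0 < b u v) x z.

Definition asum (u : X -> R) : R :=
  fine (\esum_(y in [set: X]) (Num.max (u y) 0)%:E)
  - fine (\esum_(y in [set: X]) (Num.max (- u y) 0)%:E).

Definition domH (b : X -> X -> R) (f : X -> R) : Prop :=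
  forall x, (\esum_(y in [set: X]) (b x y * `|f y|)%:E < +oo)%E.

Definition Hop (b : X -> X -> R) (c : X -> R) (f : X -> R) (x : X) : R :=
  asum (fun y => b x y * (f x - f y)) + c x * f x.

Definition Splus (b : X -> X -> R) (c : X -> R) (f : X -> R) : Prop :=
  [/\ forall x, 0 <= f x, exists x, f x != 0, domH b f
    & forall x, 0 <= Hop b c f x].

End Graphs.

(* Main.v *)
Require Import Defs.
From HB Require Import structures.
From mathcomp Require Import all_boot all_order all_algebra.
From mathcomp Require Import all_classical all_reals all_analysis.
From mathcomp Require Import lra.
Import Order.TTheory GRing.Theory Num.Theory.
Import numFieldTopology.Exports numFieldNormedType.Exports.
Local Open Scope classical_set_scope.
Local Open Scope ring_scope.

Section Aux.
Variables (R : realType) (X : countType).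
Local Notation E g := (\esum_(y in [set: X]) ((g y)%:E : \bar R))%E.

Lemma esum_le_seq (g : X -> R) (g0 : forall y, 0 <= g y) (M : R) :
  (E g <= M%:E)%E <-> forall s, uniq s -> \sum_(y <- s) g y <= M.
Proof.
split.
  move=> H s us; rewrite -lee_fin; apply: le_trans H.
  rewrite -sumEFin fsbig_seq //; apply: esum_ge; exists [set` s] => //.
  by split => //; exact: finite_seq.
move=> H; apply: ge_ereal_sup => _ [A [finA _] <-].
rewrite fsumEFin // lee_fin fsbig_finite //; apply: H.
exact: finmap.fset_uniq.
Qed.

Lemma esumZ (g : X -> R) (g0 : forall y, 0 <= g y) (r : R) (r0 : 0 <= r) :
  E (fun y => r * g y) = (r%:E * E g)%E.
Proof.
have ne : [set (\sum_(y \in A) (g y)%:E)%E | A in fsets [set: X]] != set0.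
  apply/set0P; exists 0%E; exists set0; first exact: fsets_set0.
  by rewrite fsbig_set0.
rewrite /esum; apply: eq_trans (ereal_supZl ne r0).
congr ereal_sup; apply/seteqP; split.
  move=> _ [A [finA sA] <-].
  exists (\sum_(y \in A) (g y)%:E)%E; first by exists A.
  by rewrite !fsumEFin // -EFinM mulr_fsumr.
move=> _ [_ [A [finA sA] <-] <-].
exists A => //.
by rewrite !fsumEFin // -EFinM mulr_fsumr.
Qed.


Lemma esum_finE (g : X -> R) (g0 : forall y, 0 <= g y) :
  (E g < +oo)%E -> E g = ((fine (E g))%:E).
Proof.
move=> h; rewrite fineK // ge0_fin_numE //; by apply: esum_ge0 => y _; rewrite lee_fin.
Qed.

Lemma asum_split (u p q : X -> R) (p0 : forall y, 0 <= p y)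
  (q0 : forall y, 0 <= q y) (hp : (E p < +oo)%E) (hq : (E q < +oo)%E)
  (hu : forall y, u y = p y - q y) :
  asum u = fine (E p) - fine (E q).
Proof.
have key y : Num.max (u y) 0 + q y = Num.max (- u y) 0 + p y.
  rewrite hu; case/orP: (le_total 0 (p y - q y)) => h.
    rewrite (max_l h) (max_r _); last by rewrite oppr_le0.
    by rewrite add0r subrK.
  rewrite (max_r h) (max_l _); last by rewrite oppr_ge0.
  by rewrite add0r opprB subrK.
have m1 y : 0 <= Num.max (u y) 0 by rewrite le_max lexx orbT.
have m2 y : 0 <= Num.max (- u y) 0 by rewrite le_max lexx orbT.
have e : (E (fun y => Num.max (u y) 0) + E q = E (fun y => Num.max (- u y) 0) + E p)%E.
  rewrite -!esumD //; last 4 first.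
  - by move=> y _; rewrite lee_fin.
  - by move=> y _; rewrite lee_fin.
  - by move=> y _; rewrite lee_fin.
  - by move=> y _; rewrite lee_fin.
  by apply: eq_esum => y _; rewrite -!EFinD key.
have l1 : (E (fun y => Num.max (u y) 0) < +oo)%E.
  apply: le_lt_trans hp; apply: le_esum => y _; rewrite lee_fin ge_max p0 andbT.
  by rewrite hu lerBlDr lerDl.
have l2 : (E (fun y => Num.max (- u y) 0) < +oo)%E.
  apply: le_lt_trans hq; apply: le_esum => y _; rewrite lee_fin ge_max q0 andbT.
  by rewrite hu opprB lerBlDr lerDl.
move: e; rewrite (esum_finE _ m1 l1) (esum_finE _ m2 l2) (esum_finE _ p0 hp).
rewrite (esum_finE _ q0 hq) -!EFinD => -[e].
rewrite /asum /=; lra.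
Qed.


Lemma cond_iff (b : X -> X -> R) (c : X -> R) (b0 : forall x y, 0 <= b x y)
  (bs : forall x, (E (b x) < +oo)%E) (f : X -> R) (f0 : forall y, 0 <= f y)
  (x : X) :
  ((E (fun y => b x y * `|f y|) < +oo)%E /\ 0 <= Hop b c f x) <->
  (forall s, uniq s -> \sum_(y <- s) b x y * f y <= (fine (E (b x)) + c x) * f x).
Proof.
rewrite (eq_esum (b := fun y => (b x y * f y)%:E)); last first.
  by move=> y _; rewrite ger0_norm.
have q0 y : 0 <= b x y * f y by rewrite mulr_ge0.
have p0 y : 0 <= b x y * f x by rewrite mulr_ge0.
have Ep : E (fun y => b x y * f x) = ((f x * fine (E (b x)))%:E).
  rewrite (eq_esum (b := fun y => (f x * b x y)%:E)); last by move=> y _; rewrite mulrC.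
  by rewrite esumZ // (esum_finE _ (b0 x) (bs x)).
have hp : (E (fun y => b x y * f x) < +oo)%E by rewrite Ep ltry.
have Hq : (E (fun y => b x y * f y) < +oo)%E ->
   Hop b c f x = f x * fine (E (b x)) - fine (E (fun y => b x y * f y)) + c x * f x.
  move=> hq; rewrite /Hop (@asum_split _ (fun y => b x y * f x)
     (fun y => b x y * f y)) //; first by rewrite Ep.
  by move=> y; rewrite mulrBr.
split.
  move=> [hq hH] s us; move: s us; apply/esum_le_seq => //.
  rewrite (esum_finE _ q0 hq) lee_fin; move: hH; rewrite Hq //; lra.
move=> /esum_le_seq => /(_ q0) hle.
have hq : (E (fun y => b x y * f y) < +oo)%E by apply: le_lt_trans hle _; rewrite ltry.
split => //; rewrite Hq //.
move: hle; rewrite (esum_finE _ q0 hq) lee_fin; lra.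
Qed.

End Aux.
Lemma cont_proj (R : realType) (X : countType) (y : X) :
  continuous (fun f : {ptws X -> R} => f y).
Proof. exact: (@proj_continuous X (fun _ => R) y). Qed.

Lemma cont_sum (R : realType) (X : countType) (w : X -> R) (s : seq X) :
  continuous (fun f : {ptws X -> R} => \sum_(y <- s) w y * f y).
Proof.
elim: s => [|a s IH].
  have -> : (fun f : {ptws X -> R} => \sum_(y <- [::]) w y * f y) = fun=> 0.
    by apply: funext => f; rewrite big_nil.
  exact: cst_continuous.
have -> : (fun f : {ptws X -> R} => \sum_(y <- a :: s) w y * f y) =
   (fun f : {ptws X -> R} => w a * f a + \sum_(y <- s) w y * f y).
  by apply: funext => f; rewrite big_cons.
move=> f; apply: (@continuousD _ _ _ (fun f : {ptws X -> R} => w a * f a)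
   (fun f => \sum_(y <- s) w y * f y)); last exact: IH.
apply: (@continuousM _ _ (fun=> w a) (fun f : {ptws X -> R} => f a)).
  exact: cst_continuous.
exact: cont_proj.
Qed.

Lemma crt_ind (X : Type) (rel : X -> X -> Prop) (Q : X -> Prop)
  (step : forall x y, rel x y -> Q x -> Q y) :
  forall x z, Relation_Operators.clos_refl_trans X rel x z -> Q x -> Q z.
Proof.
move=> x z h; apply Operators_Properties.clos_rt_rt1n in h.
induction h as [|a y w r _ IH]; first by [].
by move=> Qa; apply: IH; exact: (step _ _ r Qa).
Qed.

Theorem corollary2 (R : realType) (X : countType) (b : X -> X -> R) (c : X -> R)
  (x0 : X)
  (b_ge0 : forall x y, 0 <= b x y)
  (b_sum : forall x, (\esum_(y in [set: X]) (b x y)%:E < +oo)%E)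
  (b_conn : graph_connected b) :
  compact ([set f : {ptws X -> R} | Splus b c f /\ f x0 = 1]).
Proof.
pose K x := fine (\esum_(y in [set: X]) (b x y)%:E)%E + c x.
pose T := [set f : {ptws X -> R} | (forall y, 0 <= f y) /\ f x0 = 1 /\
  forall x s, uniq s -> \sum_(y <- s) b x y * f y <= K x * f x].
have ST : [set f : {ptws X -> R} | Splus b c f /\ f x0 = 1] = T.
  apply/seteqP; split => f /=.
    move=> [[f0 _ hD hH] f1]; split; [exact: f0 | split; [exact: f1|]] => x.
    exact: (proj1 (@cond_iff R X b c b_ge0 b_sum f f0 x) (conj (hD x) (hH x))).
  move=> [f0 [f1 hP]]; split => //; split => //.
  - by exists x0; rewrite f1 oner_neq0.
  - by move=> x; exact: (proj1 (proj2 (@cond_iff R X b c b_ge0 b_sum f f0 x) (hP x))).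
  - by move=> x; exact: (proj2 (proj2 (@cond_iff R X b c b_ge0 b_sum f f0 x) (hP x))).
rewrite ST.
have cT : closed T.
  have -> : T = (\bigcap_(y in [set: X])
      ((fun f : {ptws X -> R} => f y) @^-1` [set r | 0 <= r])) `&`
    (((fun f : {ptws X -> R} => f x0) @^-1` [set r | r = 1]) `&`
     \bigcap_(p in [set p : X * seq X | uniq p.2])
      ((fun f : {ptws X -> R} => K p.1 * f p.1 - \sum_(y <- p.2) b p.1 y * f y)
         @^-1` [set r | 0 <= r])).
    apply/seteqP; split => f /=.
      move=> [f0 [f1 hP]]; split; first by move=> y _; exact: f0.
      split => // -[x s] /= us; rewrite subr_ge0; exact: hP.
    move=> [f0 [f1 hP]]; split; first by move=> y; exact: f0.
    split => // x s us; have := hP (x, s) us; by rewrite /= subr_ge0.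
  apply: closedI; [|apply: closedI].
  - apply: closed_bigI => y _; apply: preimage_closed; last exact: closed_ge.
    by move=> f _; exact: cont_proj.
  - apply: preimage_closed; last exact: closed_eq.
    by move=> f _; exact: cont_proj.
  - apply: closed_bigI => -[x s] _; apply: preimage_closed; last exact: closed_ge.
    move=> f _ /=.
    apply: (@continuousB _ _ _ (fun f : {ptws X -> R} => K x * f x)
      (fun f : {ptws X -> R} => \sum_(y <- s) b x y * f y)); last exact: cont_sum.
    apply: (@continuousM _ _ (fun=> K x) (fun f : {ptws X -> R} => f x)).
      exact: cst_continuous.
    exact: cont_proj.
have bnd : forall z, exists M : R, forall f, T f -> f z <= M.
  move=> z; apply: (@crt_ind X _ (fun z => exists M : R, forall f, T f -> f z <= M) _ x0 z (b_conn x0 z)); last first.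
    by exists 1 => f [_ [-> _]].
  move=> x y bxy [M hM].
  exists (Num.max (K x) 0 * M / b x y) => f Tf.
  have [f0 [_ hP]] := Tf.
  rewrite ler_pdivlMr //.
  have := hP x [:: y] isT; rewrite big_seq1 => h.
  rewrite mulrC; apply: (le_trans h).
  apply: le_trans (ler_wpM2l _ (hM f Tf)); last by rewrite le_max lexx orbT.
  by apply: ler_wpM2r => //; rewrite le_max lexx.
have [Mf hM] := choice bnd.
have cB : compact [set f : {ptws X -> R} | forall i, (fun i => `[0, Mf i]%classic) i (f i)].
  exact: (@tychonoff X (fun _ => R) (fun i => `[0, Mf i]%classic) (fun i => @segment_compact R 0 (Mf i))).
apply: (subclosed_compact cT cB).
move=> f Tf i; rewrite /= in_itv /=; apply/andP; split.
  by have [f0 _] := Tf; exact: f0.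
exact: hM.
Qed.
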